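(* Let $K\ge2$ and let $\mathscr{M}_K\subseteq\mathscr{S}_K$ be closed with at least two elements. Then $$4\,\kappa(\{\{1,\dots,K\}\},\mathscr{M}_K)\ge\mathrm{diam}^2(\mathscr{M}_K):=\max\{\|\nu-\gamma\|^2:\nu,\gamma\in\mathscr{M}_K\}.$$
   Context: $\mathscr{S}_K=\{\delta\in[0,1]^K:\sum_i\delta_i=1\}$; $\|\cdot\|$ Euclidean norm; $e_j(K)$ the $j$-th standard basis vector of $\mathbb{R}^K$. For a partition $\mathcal{H}=\{\mathcal{H}_1,\dots,\mathcal{H}_l\}$ of $\{1,\dots,K\}$, let $B_i$ be the $K\times|\mathcal{H}_i|$ matrix with columns $e_j(K)$, $j\in\mathcal{H}_i$, and define $$\kappa(\mathcal{H},\mathscr{M}_K)=\sup\Big\{\Big[\max_{\delta\in\mathscr{M}_K}v'\delta-\sup_{\delta\in\mathscr{T}}v'\delta\Big]\wedge\min_{i=1,\dots,l}\Big[\max_{\delta\in\mathscr{M}_K}(v+B_iw_i)'\delta-\sup_{\delta\in\mathscr{M}_K\setminus\mathscr{T}}(v+B_iw_i)'\delta\Big]\Big\},$$ the supremum over all nonempty Borel sets $\mathscr{T}\subsetneq\mathscr{M}_K$, all $v\in[-1,1]^K$ and all $w_i\in[-1,1]^{|\mathcal{H}_i|}$, $i=1,\dots,l$. *)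

(* Defs.v *)
From HB Require Import structures.
From mathcomp Require Import all_boot all_order all_algebra.
From mathcomp Require Import all_classical all_reals all_analysis.
Set Implicit Arguments. Unset Strict Implicit. Unset Printing Implicit Defensive.
Import Order.TTheory GRing.Theory Num.Theory.
Import numFieldNormedType.Exports.
Local Open Scope classical_set_scope.
Local Open Scope ring_scope.

Section Defs.
Variables (R : realType) (K : nat).

Definition dotp (v d : 'rV[R]_K) : R := \sum_(j < K) v 0 j * d 0 j.

Definition sqdist (x y : 'rV[R]_K) : R := \sum_(j < K) (x 0 j - y 0 j) ^+ 2.

Definition simplex : set 'rV[R]_K :=
  [set d | (forall j, 0 <= d 0 j <= 1) /\ \sum_(j < K) d 0 j = 1].

Definition borel_set (A : set 'rV[R]_K) : Prop := <<s (fun B : set 'rV[R]_K => open B) >> A.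

Definition in_cube (v : 'rV[R]_K) : Prop := forall j, -1 <= v 0 j <= 1.

(* B_i w_i : the vector with entries w at the coordinates in H, 0 elsewhere *)
Definition embed (H : {set 'I_K}) (w : 'rV[R]_K) : 'rV[R]_K :=
  \row_j (if j \in H then w 0 j else 0).

Definition gap (M T : set 'rV[R]_K) (u : 'rV[R]_K) : R :=
  sup [set dotp u d | d in M] - sup [set dotp u d | d in T].

(* The family (w_i)_i is given by w : {set 'I_K} -> 'rV_K, where only the
   coordinates of w H in H matter and are required to lie in [-1,1]. *)
Definition kappa (P : {set {set 'I_K}}) (M : set 'rV[R]_K) : R :=
  sup [set x | exists (T : set 'rV[R]_K) (v : 'rV[R]_K)
                      (w : {set 'I_K} -> 'rV[R]_K),
        [/\ borel_set T, T !=set0, T `<=` M & T != M] /\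
        [/\ in_cube v,
            (forall H, H \in P -> forall j, j \in H -> -1 <= w H 0 j <= 1) &
            x = \big[Order.min/gap M T v]_(H in P)
                   gap M (M `\` T) (v + embed H (w H))]].

Definition diam2 (M : set 'rV[R]_K) : R :=
  sup [set sqdist x y | x in M & y in M].

End Defs.

(* Main.v *)
Require Import Defs.
From HB Require Import structures.
From mathcomp Require Import all_boot all_order all_algebra.
From mathcomp Require Import all_classical all_reals all_analysis.
From mathcomp Require Import ring lra.
Import Order.TTheory GRing.Theory Num.Theory.
Import numFieldNormedType.Exports.
Local Open Scope classical_set_scope.
Local Open Scope ring_scope.
Section S.
Variables (R : realType) (K : nat).
Lemma coord_cont (j : 'I_K) : continuous (fun x : 'rV[R]_K => x 0 j).
Proof.
move=> u A /nbhs_ballP[e /= e0 eA].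
apply/nbhs_ballP; exists e => //= v [_ uv]; apply: eA; exact: uv.
Qed.
Lemma dotp_cont (u : 'rV[R]_K) : continuous (dotp u).
Proof.
rewrite /dotp.
apply: (@continuous_big _ _ +%R 0 xpredT); first exact: add_continuous.
move=> j _.
move=> x; apply: continuousM; [exact: cst_continuous | exact: (coord_cont j x)].
Qed.

Lemma borelD (M O : set 'rV[R]_K) : closed M -> open O -> borel_set (M `\` O).
Proof.
move=> cM oO.
have hM : <<s (fun B : set 'rV[R]_K => open B)>> M.
  rewrite -[M]setCK; apply: sigma_algebraC; apply: sub_sigma_algebra.
  exact: closed_openC.
have hO : <<s (fun B : set 'rV[R]_K => open B)>> O by exact: sub_sigma_algebra.
exact: (@measurableD _ (g_sigma_algebraType (fun B : set 'rV[R]_K => open B)) _ _ hM hO).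
Qed.

Lemma dotp_bound (v d : 'rV[R]_K) : @simplex R K d -> `|dotp v d| <= \sum_j `|v 0 j|.
Proof.
move=> [hd _]; rewrite /dotp; apply: le_trans (ler_norm_sum _ _ _) _.
apply: ler_sum => j _; rewrite normrM; have /andP[d0 d1] := hd j.
by rewrite (ger0_norm d0) ler_piMr.
Qed.

Lemma cube_bound (v : 'rV[R]_K) : in_cube v -> \sum_j `|v 0 j| <= K%:R.
Proof.
move=> hv; apply: le_trans (_ : \sum_(j < K) (1:R) <= _).
  by apply: ler_sum => j _; rewrite ler_norml; exact: hv.
by rewrite sumr_const card_ord.
Qed.

Lemma img_has_sup (S : set 'rV[R]_K) v : S `<=` @simplex R K -> S !=set0 ->
  has_sup [set dotp v d | d in S].
Proof.
move=> Ss [d Sd]; split; first by exists (dotp v d), d.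
exists (\sum_j `|v 0 j|) => _ [e Se <-].
exact: le_trans (ler_norm _) (dotp_bound v _ (Ss _ Se)).
Qed.

Lemma sup_ge (S : set 'rV[R]_K) v d : S `<=` @simplex R K -> S d ->
  dotp v d <= sup [set dotp v d | d in S].
Proof.
move=> Ss Sd; apply: sup_upper_bound; first by apply: img_has_sup => //; exists d.
by exists d.
Qed.

Lemma sup_le (S : set 'rV[R]_K) v b : S !=set0 ->
  (forall d, S d -> dotp v d <= b) -> sup [set dotp v d | d in S] <= b.
Proof.
move=> [d Sd] hb; apply: ge_sup; first by exists (dotp v d), d.
by move=> _ [e Se <-]; exact: hb.
Qed.

Lemma gap_ub (M T : set 'rV[R]_K) v : M `<=` @simplex R K -> T `<=` M -> T !=set0 ->
  gap M T v <= 2 * \sum_j `|v 0 j|.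
Proof.
move=> Ms TM [d Td]; rewrite /gap.
have h1 : sup [set dotp v d | d in M] <= \sum_j `|v 0 j|.
  apply: sup_le; first by exists d; exact: TM.
  move=> e Me; exact: le_trans (ler_norm _) (dotp_bound v _ (Ms _ Me)).
have h2 : - \sum_j `|v 0 j| <= sup [set dotp v d | d in T].
  apply: le_trans (sup_ge _ v _ (fun e Te => Ms _ (TM _ Te)) Td).
  have := ler_norm (- dotp v d); have := dotp_bound v _ (Ms _ (TM _ Td)); rewrite normrN; lra.
lra.
Qed.

Lemma dotpZ (k : R) (u d : 'rV[R]_K) : dotp (k *: u) d = k * dotp u d.
Proof. by rewrite /dotp mulr_sumr; apply: eq_bigr => j _; rewrite !mxE mulrA. Qed.

Lemma dotp_emb (u d : 'rV[R]_K) :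
  dotp (2^-1 *: u + embed [set: 'I_K]%SET (- u)) d = - (2^-1 * dotp u d).
Proof.
rewrite /dotp mulr_sumr -sumrN; apply: eq_bigr => j _; rewrite !mxE (@finset.in_setT _ j).
by field.
Qed.

Lemma sqdistE (x y : 'rV[R]_K) : dotp (x - y) x - dotp (x - y) y = sqdist x y.
Proof.
rewrite /dotp /sqdist -sumrB; apply: eq_bigr => j _; rewrite !mxE; ring.
Qed.

Lemma key (M : set 'rV[R]_K) (nu ga : 'rV[R]_K) :
  M `<=` @simplex R K -> closed M -> M nu -> M ga -> 0 < sqdist nu ga ->
  sqdist nu ga <= 4 * kappa [set [set: 'I_K]]%SET M.
Proof.
move=> Ms cM Mnu Mga hpos.
pose u := nu - ga.
pose a := dotp u nu; pose b := dotp u ga.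
have hab : a - b = sqdist nu ga by rewrite /a /b sqdistE.
pose c := (a + b) / 2.
have hc : c = (a + b) / 2 by [].
pose O := [set d : 'rV[R]_K | c < dotp u d].
pose T := M `\` O.
have oO : open O.
  exact: (open_comp (f := dotp u) (fun x _ => dotp_cont u x) (open_gt (y:=c))).
have TM : T `<=` M by move=> d [].
have Tga : T ga.
  split => // hcb; rewrite /O /= -/b in hcb; lra.
have Tnu : ~ T nu.
  move=> [_ h]; apply: h; rewrite /O /= -/a; lra.
have TneM : T != M.
  apply/eqP => e; apply: Tnu; rewrite e //.
have TdT : forall d, T d -> dotp u d <= c.
  move=> d [_ h]; rewrite leNgt; apply/negP => hcd; exact: h.
have MTO : forall d, (M `\` T) d -> c < dotp u d.
  move=> d [Md h]; rewrite ltNge; apply/negP => hcd; apply: h; split => // hlt; rewrite /O /= in hlt; lra.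
have MTne : (M `\` T) !=set0 by exists nu; split.
have Tne : T !=set0 by exists ga.
have uc : forall j, -1 <= u 0 j <= 1.
  move=> j; rewrite !mxE.
  have /andP[h1 h2] := (Ms _ Mnu).1 j; have /andP[h3 h4] := (Ms _ Mga).1 j.
  apply/andP; split; lra.
pose v := 2^-1 *: u.
pose w := fun _ : {set 'I_K} => - u.
pose x := \big[Order.min/gap M T v]_(H in [set [set: 'I_K]]%SET)
                   gap M (M `\` T) (v + embed H (w H)).
have hk : x <= kappa [set [set: 'I_K]]%SET M.
  rewrite /kappa; apply: sup_upper_bound; last first.
    exists T, v, w; split; split => //.
    - exact: borelD.
    - move=> j; rewrite mxE; have /andP[h1 h2] := uc j; apply/andP; split; lra.
    - move=> H _ j _; rewrite mxE; have /andP[h1 h2] := uc j; apply/andP; split; lra.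
  split.
    exists x, T, v, w; split; split => //.
    - exact: borelD.
    - move=> j; rewrite mxE; have /andP[h1 h2] := uc j; apply/andP; split; lra.
    - move=> H _ j _; rewrite mxE; have /andP[h1 h2] := uc j; apply/andP; split; lra.
  exists (2 * K%:R) => y [T' [v' [w' [[bT neT sT _] [cv _ ->]]]]].
  apply: le_trans (_ : gap M T' v' <= _).
    by elim/big_rec: _ => // i y' _ hy; rewrite ge_min hy orbT.
  apply: le_trans (gap_ub _ _ v' Ms sT neT) _.
  have := cube_bound v' cv; lra.
have hx : sqdist nu ga / 4 <= x.
  rewrite /x; elim/big_ind: _ => [|y z hy hz | H /set1P ->].
  - rewrite /gap.
    have h1 : 2^-1 * a <= sup [set dotp v d | d in M].
      by have := sup_ge M v nu Ms Mnu; rewrite /v dotpZ.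
    have h2 : sup [set dotp v d | d in T] <= 2^-1 * c.
      apply: sup_le => // d Td; rewrite /v dotpZ; have := TdT d Td; lra.
    lra.
  - by rewrite le_min hy hz.
  - rewrite /gap /w /v.
    have h3 : -(2^-1 * b) <= sup [set dotp (2^-1 *: u + embed [set: 'I_K]%SET (- u)) d | d in M].
      by have := sup_ge M (2^-1 *: u + embed [set: 'I_K]%SET (- u)) ga Ms Mga; rewrite dotp_emb.
    have h4 : sup [set dotp (2^-1 *: u + embed [set: 'I_K]%SET (- u)) d | d in M `\` T] <= -(2^-1 * c).
      apply: sup_le => // d hd; rewrite dotp_emb; have := MTO d hd; lra.
    lra.
lra.
Qed.
End S.

Theorem lemmaB1 (R : realType) (K : nat) (M : set 'rV[R]_K) :
  (2 <= K)%N ->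
  M `<=` @simplex R K ->
  closed M ->
  (exists x y, [/\ M x, M y & x != y]) ->
  4 * kappa [set [set: 'I_K]]%SET M >= diam2 M.
Proof.
move=> _ Ms cM [x0 [y0 [Mx My nxy]]].
have h0 : 0 <= sqdist x0 y0 by apply: sumr_ge0 => j _; exact: sqr_ge0.
have pos : 0 < sqdist x0 y0.
  rewrite lt_def h0 andbT; apply: contra nxy => /eqP h; apply/eqP/rowP => j.
  have := psumr_eq0P (fun j _ => sqr_ge0 (x0 0 j - y0 0 j)) h isT.
  by move=> /(_ j) /eqP; rewrite sqrf_eq0 subr_eq0 => /eqP.
have kpos : 0 <= kappa [set [set: 'I_K]]%SET M.
  have := @key R K M x0 y0 Ms cM Mx My pos; lra.
rewrite /diam2; apply: ge_sup.
  by exists (sqdist x0 y0); exists x0 => //; exists y0.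
move=> _ [x Mx' [y My' <-]].
have [hp|hn] := ltP 0 (sqdist x y); first exact: key.
lra.
Qed.
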